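(* Let $r,d$ be positive integers with $n=(r+1)d\geq 3$. Then $\Delta_d^t\left(C_{(r+1)d}^r\right)\simeq\mathbb{S}^{r-1}$.
   Context: All graphs are finite and simple; $\alpha(G)$ is the independence number and $G[S]$ the induced subgraph on $S$. $\Delta_d^t(G)=\{\sigma\subseteq V(G):\ \alpha(G[V(G)\setminus\sigma])\geq d\}$. $C_n$ is the cycle on $\{1,\dots,n\}$ with edges $\{i,i+1\}$ and $\{1,n\}$; $C_n^r$ is the graph on the same vertices where distinct vertices are adjacent iff their distance in $C_n$ is at most $r$. *)

(* Defs.v *)
From HB Require Import structures.
From mathcomp Require Import all_boot all_order all_algebra.
From mathcomp Require Import all_classical all_reals all_analysis.
Set Implicit Arguments. Unset Strict Implicit. Unset Printing Implicit Defensive.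
Import Order.TTheory GRing.Theory Num.Theory.
Import numFieldNormedType.Exports.

(* vertices 1..n of the paper are encoded as 0..n-1 *)

Definition cycdist (n : nat) (i j : 'I_n) : nat :=
  minn `|i - j|%N (n - `|i - j|%N).

Definition cyc_pow_adj (n r : nat) (i j : 'I_n) : bool :=
  (i != j) && (cycdist i j <= r).

Definition independent (T : finType) (adj : rel T) (I : {set T}) : bool :=
  [forall x in I, forall y in I, ~~ adj x y].

Definition alpha_induced (T : finType) (adj : rel T) (S : {set T}) : nat :=
  \max_(I : {set T} | (I \subset S) && independent adj I) #|I|.

Definition Delta_t (T : finType) (adj : rel T) (d : nat) (sigma : {set T}) : bool :=
  d <= alpha_induced adj (~: sigma).

Local Open Scope ring_scope.
Local Open Scope classical_set_scope.

Definition supp (R : realType) (n : nat) (x : 'rV[R]_n) : {set 'I_n} :=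
  [set i | x ord0 i != 0].

Definition geom_real (R : realType) (n : nat) (K : pred {set 'I_n}) : set 'rV[R]_n :=
  [set x : 'rV[R]_n | (forall i, 0 <= x ord0 i) /\ \sum_i x ord0 i = 1 /\ K (supp x)].

(* the unit sphere S^(m-1) in R^m *)
Definition sphere (R : realType) (m : nat) : set 'rV[R]_m :=
  [set y : 'rV[R]_m | \sum_i (y ord0 i) ^+ 2 = 1].

Definition homotopic_on (R : realType) (X Y : topologicalType)
  (A : set X) (B : set Y) (f g : X -> Y) : Prop :=
  exists H : R * X -> Y,
    {within [set p : R * X | 0 <= p.1 <= 1 /\ A p.2], continuous H} /\
    (forall t x, 0 <= t <= 1 -> A x -> B (H (t, x))) /\
    (forall x, A x -> H (0, x) = f x) /\
    (forall x, A x -> H (1, x) = g x).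

Definition homotopy_equiv (R : realType) (X Y : topologicalType)
  (A : set X) (B : set Y) : Prop :=
  exists (f : X -> Y) (g : Y -> X),
    {within A, continuous f} /\ {within B, continuous g} /\
    f @` A `<=` B /\ g @` B `<=` A /\
    homotopic_on R A A (g \o f) id /\ homotopic_on R B B (f \o g) id.

(* Main.v *)
Require Import Defs.
From HB Require Import structures.
From mathcomp Require Import all_boot all_order all_algebra.
From mathcomp Require Import all_classical all_reals all_analysis.
From mathcomp Require Import zify.
Import numFieldNormedType.Exports.
Set Implicit Arguments. Unset Strict Implicit. Unset Printing Implicit Defensive.
Import Order.TTheory GRing.Theory Num.Theory.
From mathcomp Require Import ring lra.
Lemma distE (a b : nat) : `|a - b|%N = if a <= b then b - a else a - b.
Proof. case: leqP => h; [exact: distnEr | apply: distnEl; exact: ltnW]. Qed.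

Lemma cycdistE n (i j : 'I_n) :
  cycdist i j = minn (if (i:nat) <= j then j - i else i - j)
                     (n - (if (i:nat) <= j then j - i else i - j)).
Proof. by rewrite /cycdist distE. Qed.

Ltac splitifs := repeat match goal with
  | |- context[if ?b then _ else _] => case: (boolP b) => ?
  | H : context[if ?b then _ else _] |- _ => move: H
  end.

Definition fwd n (s i : nat) := if s <= i then i - s else i + n - s.

Lemma win_le1 n r (I : {set 'I_n}) (s : 'I_n) :
  independent (@cyc_pow_adj n r) I -> #|[set i in I | fwd n s i <= r]| <= 1.
Proof.
move=> hI; apply/card_le1P => a; rewrite inE => /andP[aI fa] b; rewrite !inE.
apply/idP/eqP => [/andP[bI fb]| ->]; last by rewrite aI fa.
apply/eqP; apply/negPn/negP => nba.
move: hI => /forallP/(_ a)/implyP/(_ aI)/forallP/(_ b)/implyP/(_ bI).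
rewrite /cyc_pow_adj eq_sym nba /= cycdistE -ltnNge.
have := ltn_ord a; have := ltn_ord b; have := ltn_ord s.
move: nba => /eqP nba.
have nba' : (b : nat) <> a by move=> h; apply: nba; exact: val_inj.
move: fa fb; rewrite /fwd.
splitifs; lia.
Qed.
Lemma back_lt n r (i : 'I_n) (t : 'I_r.+1) : r < n ->
  (if (t:nat) <= i then i - t else i + n - t) < n.
Proof. have := ltn_ord i; have := ltn_ord t; splitifs; lia. Qed.

Lemma win_count n r (i : 'I_n) : r < n ->
  #|[set s : 'I_n | fwd n s i <= r]| = r.+1.
Proof.
move=> rn.
pose g (t : 'I_r.+1) : 'I_n := Ordinal (back_lt i t rn).
have -> : [set s : 'I_n | fwd n s i <= r] = g @: (finset.setT : {set 'I_r.+1}).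
  apply/setP => s; rewrite inE; apply/idP/imsetP => [h|[t _ ->]].
  - have ft : fwd n s i < r.+1 by [].
    exists (Ordinal ft); first exact: finset.in_setT. apply: val_inj => /=.
    have := ltn_ord i; have := ltn_ord s; move: h; rewrite /fwd; splitifs; lia.
  - rewrite /fwd /=; have := ltn_ord i; have := ltn_ord t; splitifs; lia.
rewrite card_imset ?cardsT ?card_ord //.
move=> t1 t2 /(congr1 val) /= h; apply: val_inj => /=.
move: h; have := ltn_ord i; have := ltn_ord t1; have := ltn_ord t2; splitifs; lia.
Qed.
Lemma card_condE (T : finType) (I : {set T}) (P : pred T) :
  #|[set i in I | P i]| = \sum_(i in I) (P i : nat).
Proof.
rewrite -sum1_card big_mkcond [RHS]big_mkcond /=.
by apply: eq_bigr => i _; rewrite !inE; case: (i \in I); case: (P i).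
Qed.

Lemma win_hit r d (I : {set 'I_(r.+1 * d)}) :
  independent (@cyc_pow_adj _ r) I -> d <= #|I| ->
  forall s : 'I_(r.+1 * d), exists2 i, i \in I & fwd (r.+1 * d) s i <= r.
Proof.
set n := (r.+1 * d)%N => hI hd s0.
have : 0 < n by exact: leq_ltn_trans (leq0n s0) (ltn_ord s0).
rewrite /n muln_gt0 => /andP[_ d0].
have rn : r < n by rewrite /n; nia.
have tot : \sum_(s : 'I_n) #|[set i in I | fwd n s i <= r]| = (#|I| * r.+1)%N.
  under eq_bigr => s _ do rewrite card_condE.
  rewrite exchange_big /=.
  rewrite -sum1_card big_distrl /=.
  apply: eq_bigr => i iI; rewrite mul1n; apply: eq_trans (win_count i rn).
  rewrite -sum1_card [RHS]big_mkcond /=; apply: eq_bigr => s _; rewrite inE.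
  by case: leqP.
case: (posnP #|[set i in I | fwd n s0 i <= r]|) => [c0|]; last first.
  by case/card_gt0P => i; rewrite inE => /andP[]; exists i.
have : (\sum_(s : 'I_n) #|[set i in I | fwd n s i <= r]| <= n.-1)%N.
  rewrite (bigD1 s0) //= c0 add0n.
  apply: (@leq_trans (\sum_(s : 'I_n | s != s0) 1)%N).
    by apply: leq_sum => s _; exact: win_le1.
  by rewrite sum1_card cardC1 card_ord.
rewrite tot => h; exfalso.
have : (d * r.+1 <= #|I| * r.+1)%N by rewrite leq_mul2r hd orbT.
move: h; rewrite /n; nia.
Qed.
Definition nxtv n r (i : nat) := if i + r.+1 < n then i + r.+1 else i + r.+1 - n.

Lemma sv_lt n (i : 'I_n) : (if i.+1 < n then i.+1 else 0) < n.
Proof. have := ltn_ord i; splitifs; lia. Qed.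

Lemma step r d (I : {set 'I_(r.+1 * d)}) (i : 'I_(r.+1 * d)) :
  independent (@cyc_pow_adj _ r) I -> d <= #|I| -> i \in I ->
  exists2 j : 'I_(r.+1 * d), j \in I & (j : nat) = nxtv (r.+1 * d) r i.
Proof.
set n := (r.+1 * d)%N => hI hd iI.
have : 0 < n by exact: leq_ltn_trans (leq0n i) (ltn_ord i).
rewrite /n muln_gt0 => /andP[_ d0].
have rn : r < n by rewrite /n; nia.
have [j jI hj] := win_hit hI hd (Ordinal (sv_lt i)).
exists j => //; apply/eqP; apply/negPn/negP => nj.
move: hI => /forallP/(_ i)/implyP/(_ iI)/forallP/(_ j)/implyP/(_ jI).
rewrite /cyc_pow_adj cycdistE negb_and negbK -ltnNge.
have := ltn_ord i; have := ltn_ord j; move: nj hj; rewrite /nxtv /fwd /=.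
case: (boolP (i == j)) => [/eqP ->|/eqP ij] /=; first by rewrite /n in rn *; splitifs; lia.
have ij' : (i:nat) <> j by move=> h; apply: ij; exact: val_inj.
rewrite /n in rn *; splitifs; lia.
Qed.
Definition clo r d (i : 'I_(r.+1 * d)) : 'I_r.+1 := Ordinal (ltn_pmod i (ltn0Sn r)).

Lemma closure r d (I : {set 'I_(r.+1 * d)}) :
  independent (@cyc_pow_adj _ r) I -> d <= #|I| ->
  forall m (i j : 'I_(r.+1 * d)), i \in I -> fwd (r.+1 * d) i j = (m * r.+1)%N -> j \in I.
Proof.
move=> hI hd; elim=> [|m IH] i j iI.
  rewrite mul0n => h; suff -> : j = i by [].
  apply: val_inj => /=; move: h; have := ltn_ord i; have := ltn_ord j.
  rewrite /fwd; splitifs; lia.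
have [i' i'I hi'] := step hI hd iI.
move=> h; apply: (IH i') => //.
move: h; rewrite [(m.+1 * _)%N]mulSn; have := ltn_ord i; have := ltn_ord j; have := ltn_ord i'.
move: hi'; rewrite /fwd /nxtv; move: (m * r.+1)%N => K.
splitifs; lia.
Qed.

Lemma comb r d (I : {set 'I_(r.+1 * d)}) :
  independent (@cyc_pow_adj _ r) I -> d <= #|I| -> 0 < d ->
  exists k, forall j, clo j = k -> j \in I.
Proof.
move=> hI hd d0.
have /card_gt0P [i iI] : 0 < #|I| by exact: leq_trans d0 hd.
exists (clo i) => j /(congr1 val) /= hij.
have dv : r.+1 %| fwd (r.+1 * d) i j.
  rewrite /fwd; case: leqP => ij.
    by rewrite -eqn_mod_dvd // hij.
  rewrite -eqn_mod_dvd; last by have := ltn_ord i; lia.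
  have e x : (x + r.+1 * d) %% r.+1 = x %% r.+1 by rewrite addnC mulnC modnMDl.
  by rewrite e hij.
apply: (closure hI hd (m := (fwd (r.+1 * d) i j %/ r.+1)) iI).
by rewrite divnK.
Qed.
Definition cls_set r d (k : 'I_r.+1) : {set 'I_(r.+1 * d)} := [set i | clo i == k].

Lemma gcls_lt r d (k : 'I_r.+1) (j : 'I_d) : (j * r.+1 + k < r.+1 * d)%N.
Proof. have := ltn_ord j; have := ltn_ord k; nia. Qed.

Lemma card_cls r d (k : 'I_r.+1) : #|cls_set d k| = d.
Proof.
pose g (j : 'I_d) : 'I_(r.+1 * d) := Ordinal (gcls_lt k j).
have -> : cls_set d k = g @: (finset.setT : {set 'I_d}).
  apply/setP => i; rewrite inE; apply/eqP/imsetP => [h|[j _ ->]].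
  - have hi : (i %/ r.+1 < d)%N by rewrite ltn_divLR //; have := ltn_ord i; nia.
    exists (Ordinal hi); first exact: finset.in_setT.
    apply: val_inj => /=; rewrite {1}(divn_eq i r.+1).
    by move: h => /(congr1 val) /= ->.
  - apply: val_inj => /=; rewrite modnMDl modn_small //.
rewrite card_imset ?cardsT ?card_ord //.
move=> j1 j2 /(congr1 val) /= h; apply: val_inj => /=; nia.
Qed.

Lemma dist_cls r d (a b : nat) : a < b -> b < r.+1 * d ->
  a %% r.+1 = b %% r.+1 -> r < minn (b - a) (r.+1 * d - (b - a)).
Proof.
move=> ab bn e.
have h1 : r.+1 %| b - a by rewrite -eqn_mod_dvd ?e // ltnW.
have h2 : r.+1 %| r.+1 * d - (b - a) by rewrite dvdn_sub // dvdn_mulr.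
have l1 : r.+1 <= b - a by apply: dvdn_leq => //; lia.
have l2 : r.+1 <= r.+1 * d - (b - a) by apply: dvdn_leq => //; lia.
lia.
Qed.

Lemma cls_indep r d (k : 'I_r.+1) : independent (@cyc_pow_adj _ r) (cls_set d k).
Proof.
apply/forallP => a; apply/implyP; rewrite inE => /eqP ha.
apply/forallP => b; apply/implyP; rewrite inE => /eqP hb.
rewrite /cyc_pow_adj negb_and negbK -ltnNge cycdistE.
case: (boolP (a == b)) => //= /eqP nab.
have nab' : (a : nat) <> b by move=> h; apply: nab; exact: val_inj.
have e : (a %% r.+1 = b %% r.+1)%N.
  by move: ha hb => /(congr1 val) /= -> /(congr1 val) /= ->.
case: (leqP a b) => ab.
  apply: dist_cls => //; try exact: ltn_ord; lia.
by apply: dist_cls => //; try exact: ltn_ord; rewrite e.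
Qed.

Lemma face_of_miss r d (s : {set 'I_(r.+1 * d)}) (k : 'I_r.+1) :
  (forall i, clo i = k -> i \notin s) -> Delta_t (@cyc_pow_adj _ r) d s.
Proof.
move=> h; rewrite /Delta_t /alpha_induced.
apply: (@leq_trans #|cls_set d k|); first by rewrite card_cls.
apply: leq_bigmax_cond.
rewrite cls_indep andbT; apply/fintype.subsetP => i; rewrite !inE => /eqP hi.
exact: h.
Qed.

Lemma miss_of_face r d (s : {set 'I_(r.+1 * d)}) : 0 < d ->
  Delta_t (@cyc_pow_adj _ r) d s -> exists k : 'I_r.+1, forall i, clo i = k -> i \notin s.
Proof.
move=> d0; rewrite /Delta_t /alpha_induced => h.
case: (boolP [exists I : {set 'I_(r.+1 * d)},
   [&& I \subset ~: s, independent (@cyc_pow_adj _ r) I & d <= #|I|]]).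
  case/existsP => I /and3P [Is hI hd].
  have [k hk] := comb hI hd d0.
  exists k => i /hk iI; move/fintype.subsetP: Is => /(_ i iI); rewrite inE.
  by [].
move/existsPn => hn; exfalso.
have : \max_(I : {set 'I_(r.+1 * d)} | (I \subset ~: s) && independent (@cyc_pow_adj _ r) I) #|I| <= d.-1.
  apply/bigmax_leqP => I /andP [Is hI].
  move: (hn I); rewrite Is hI /= -ltnNge; lia.
move=> hle; have := leq_trans h hle; lia.
Qed.
Local Open Scope ring_scope.

Lemma cont_fst (R : realType) (X : topologicalType) (p : R * X) :
  {for p, continuous (@fst R X)}.
Proof. exact: cvg_fst. Qed.

Lemma cont_snd (R : realType) (X : topologicalType) (p : R * X) :
  {for p, continuous (@snd R X)}.
Proof. exact: cvg_snd. Qed.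

Lemma cont_sum (R : realType) (T : topologicalType) (V : normedModType R)
  (I : Type) (s : seq I) (P : pred I) (g : I -> T -> V) (x : T) :
  (forall i, P i -> {for x, continuous (g i)}) ->
  {for x, continuous (fun y => \sum_(i <- s | P i) g i y)}.
Proof.
move=> hg; elim: s => [|a s IH].
  have -> : (fun y => \sum_(i <- [::] | P i) g i y) = (fun=> 0).
    by apply: boolp.funext => y; rewrite big_nil.
  exact: cvg_cst.
case: (boolP (P a)) => Pa.
  have -> : (fun y => \sum_(i <- a :: s | P i) g i y) =
            (g a + (fun y => \sum_(i <- s | P i) g i y)).
    by apply: boolp.funext => y; rewrite big_cons Pa.
  exact: continuousD (hg a Pa) IH.
have -> : (fun y => \sum_(i <- a :: s | P i) g i y) =
          (fun y => \sum_(i <- s | P i) g i y).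
  by apply: boolp.funext => y; rewrite big_cons (negbTE Pa).
exact: IH.
Qed.

Lemma cont_row (R : realType) (T : topologicalType) m (f : T -> 'rV[R]_m) (x : T) :
  (forall j, {for x, continuous (fun y => f y ord0 j)}) -> {for x, continuous f}.
Proof.
move=> hf.
have -> : f = (fun y => \sum_(j < m) f y ord0 j *: delta_mx ord0 j).
  by apply: boolp.funext => y; exact: row_sum_delta.
apply: cont_sum => j _.
exact: continuousZr_tmp (hf j).
Qed.

Lemma cont_coord (R : realType) m (x : 'rV[R]_m) j :
  {for x, continuous (fun y : 'rV[R]_m => y ord0 j)}.
Proof. exact: coord_continuous. Qed.

Lemma cont_min (R : realType) (T : topologicalType)
  (I : Type) (s : seq I) (g : I -> T -> R) (x : T) :
  (forall i, {for x, continuous (g i)}) ->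
  {for x, continuous (fun y => \big[Num.min/0]_(i <- s) g i y)}.
Proof.
move=> hg; elim: s => [|a s IH].
  have -> : (fun y => \big[Num.min/0]_(i <- [::]) g i y) = (fun=> 0).
    by apply: boolp.funext => y; rewrite big_nil.
  exact: cvg_cst.
have -> : (fun y => \big[Num.min/0]_(i <- a :: s) g i y) =
          ((g a : T -> R^o) \min (fun y => \big[Num.min/0]_(i <- s) g i y)).
  by apply: boolp.funext => y; rewrite big_cons.
exact: continuous_min (hg a) IH.
Qed.
Local Open Scope ring_scope.

Definition ysum (R : realType) r d (x : 'rV[R]_(r.+1 * d)) (k : 'I_r.+1) : R :=
  \sum_(i in cls_set d k) x ord0 i.

Lemma sum_ysum (R : realType) r d (x : 'rV[R]_(r.+1 * d)) :
  \sum_k ysum x k = \sum_i x ord0 i.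
Proof.
rewrite (partition_big (@clo r d) predT) //=.
by apply: eq_bigr => k _; apply: eq_bigl => i; rewrite inE.
Qed.

Lemma ysum_const (R : realType) r d (c : 'I_r.+1 -> R) k :
  ysum (\row_i c (@clo r d i)) k = d%:R * c k.
Proof.
rewrite /ysum (eq_bigr (fun=> c k)); last by move=> i; rewrite inE mxE => /eqP ->.
by rewrite sumr_const card_cls mulr_natl.
Qed.

Lemma ysum_ge0 (R : realType) r d (x : 'rV[R]_(r.+1 * d)) k :
  (forall i, 0 <= x ord0 i) -> 0 <= ysum x k.
Proof. by move=> h; apply: sumr_ge0 => i _. Qed.

Lemma ysum_miss (R : realType) r d (x : 'rV[R]_(r.+1 * d)) k :
  (forall i, clo i = k -> i \notin supp x) -> ysum x k = 0.
Proof.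
move=> h; apply: big1 => i; rewrite inE => /eqP /h.
by rewrite inE negbK => /eqP.
Qed.

Definition zF (R : realType) r d (x : 'rV[R]_(r.+1 * d)) : 'rV[R]_r :=
  \row_(j < r) (ysum x (lift ord_max j) - ysum x ord_max).
Definition enorm (R : realType) m (z : 'rV[R]_m) : R := Num.sqrt (\sum_j z ord0 j ^+ 2).
Definition Fm (R : realType) r d (x : 'rV[R]_(r.+1 * d)) : 'rV[R]_r :=
  (enorm (zF x))^-1 *: zF x.
Definition ue (R : realType) r (u : 'rV[R]_r) (k : 'I_r.+1) : R :=
  match unlift ord_max k with Some j => u ord0 j | None => 0 end.
Definition mn (R : realType) r (u : 'rV[R]_r) : R := \big[Num.min/0]_(k < r.+1) ue u k.
Definition Ssum (R : realType) r (u : 'rV[R]_r) : R := \sum_(k < r.+1) (ue u k - mn u).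
Definition Gm (R : realType) r d (u : 'rV[R]_r) : 'rV[R]_(r.+1 * d) :=
  \row_i ((ue u (clo i) - mn u) / (Ssum u * d%:R)).
Definition Pm (R : realType) r d (x : 'rV[R]_(r.+1 * d)) : 'rV[R]_(r.+1 * d) :=
  \row_i (ysum x (clo i) / d%:R).

Lemma ue_max (R : realType) r (u : 'rV[R]_r) : ue u ord_max = 0.
Proof. by rewrite /ue unlift_none. Qed.

Lemma ue_lift (R : realType) r (u : 'rV[R]_r) j : ue u (lift ord_max j) = u ord0 j.
Proof. by rewrite /ue liftK. Qed.

Lemma ue_cases (R : realType) r (u : 'rV[R]_r) (P : 'I_r.+1 -> R -> Prop) :
  P ord_max 0 -> (forall j, P (lift ord_max j) (u ord0 j)) -> forall k, P k (ue u k).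
Proof.
move=> h0 h1 k; case: (eqVneq ord_max k) => [<-|nk]; first by rewrite ue_max.
by have [j -> _] := unlift_some nk; rewrite ue_lift.
Qed.

Lemma mn_le (R : realType) r (u : 'rV[R]_r) k : mn u <= ue u k.
Proof. by rewrite /mn (bigD1 k) //= ge_min lexx. Qed.

Lemma mn_ge (R : realType) r (u : 'rV[R]_r) c :
  c <= 0 -> (forall k, c <= ue u k) -> c <= mn u.
Proof.
move=> c0 h; rewrite /mn; apply: (big_ind (fun v => c <= v)) => //.
by move=> a b ha hb; rewrite le_min ha hb.
Qed.

Lemma mn_attained (R : realType) r (u : 'rV[R]_r) : exists k, mn u = ue u k.
Proof.
rewrite /mn; apply: (big_ind (fun v => exists k, v = ue u k)).
- by exists ord_max; rewrite ue_max.
- move=> a b [ka ->] [kb ->]; rewrite minEle; case: ifP => _; by eexists.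
- by move=> k _; exists k.
Qed.

Definition inA (R : realType) r d (x : 'rV[R]_(r.+1 * d)) :=
  (forall i, 0 <= x ord0 i) /\ \sum_i x ord0 i = 1 /\
  Delta_t (@cyc_pow_adj _ r) d (supp x).

Lemma inA_k0 (R : realType) r d (x : 'rV[R]_(r.+1 * d)) : (0 < d)%N -> inA x ->
  exists k0, (forall i, clo i = k0 -> x ord0 i = 0) /\ ysum x k0 = 0.
Proof.
move=> d0 [_ [_ hD]]; have [k0 hk] := miss_of_face d0 hD.
exists k0; split; last exact: ysum_miss.
by move=> i /hk; rewrite inE negbK => /eqP.
Qed.

Lemma zF_neq0 (R : realType) r d (x : 'rV[R]_(r.+1 * d)) : (0 < d)%N -> inA x ->
  0 < \sum_j zF x ord0 j ^+ 2.
Proof.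
move=> d0 hx; have [k0 [_ hk0]] := inA_k0 d0 hx.
have ge : 0 <= \sum_j zF x ord0 j ^+ 2 by apply: sumr_ge0 => j _; exact: sqr_ge0.
rewrite lt0r ge andbT; apply/eqP => h0.
have hz : forall j, ysum x (lift ord_max j) = ysum x ord_max.
  have H := psumr_eq0P (fun i _ => sqr_ge0 (zF x ord0 i)) h0.
  move=> j; have := H j isT.
  by move/eqP; rewrite sqrf_eq0 mxE subr_eq0 => /eqP.
have hall : forall k, ysum x k = ysum x ord_max.
  move=> k; case: (eqVneq ord_max k) => [<-//|nk].
  by have [j -> _] := unlift_some nk; exact: hz.
have ymax : ysum x ord_max = 0 by rewrite -(hall k0).
case: hx => _ [hs _]; move: hs; rewrite -sum_ysum.
rewrite (eq_bigr (fun=> 0)); last by move=> k _; rewrite hall.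
by rewrite big1 // => /esym/eqP; rewrite oner_eq0.
Qed.

Lemma Fm_sphere (R : realType) r d (x : 'rV[R]_(r.+1 * d)) : (0 < d)%N -> inA x ->
  Defs.sphere (Fm x).
Proof.
move=> d0 hx; rewrite /sphere /= /Fm /enorm.
have hS := zF_neq0 d0 hx.
set S := \sum_j zF x ord0 j ^+ 2 in hS *.
under eq_bigr do rewrite mxE exprMn.
rewrite -mulr_sumr -/S exprVn sqr_sqrtr ?mulVf //; last exact: ltW.
by rewrite gt_eqF.
Qed.

Lemma GmFm (R : realType) r d (x : 'rV[R]_(r.+1 * d)) : (0 < d)%N -> inA x ->
  Gm d (Fm x) = Pm x.
Proof.
move=> d0 hx; have [k0 [_ hk0]] := inA_k0 d0 hx.
have hS := zF_neq0 d0 hx.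
have e0 : 0 < enorm (zF x) by rewrite /enorm sqrtr_gt0.
set e := enorm (zF x) in e0 *.
have dR : (d%:R : R) != 0 by rewrite pnatr_eq0 -lt0n.
have yge : forall k, 0 <= ysum x k by move=> k; apply: ysum_ge0; case: hx.
have hue : forall k, ue (Fm x) k = (ysum x k - ysum x ord_max) / e.
  apply: (@ue_cases _ _ (Fm x) (fun k v => v = (ysum x k - ysum x ord_max) / e)); first by rewrite subrr mul0r.
  by move=> j; rewrite /Fm !mxE -/e mulrC.
have hmn : mn (Fm x) = - ysum x ord_max / e.
  apply/le_anti/andP; split.
    by apply: le_trans (mn_le _ k0) _; rewrite hue hk0 sub0r.
  apply: mn_ge.
    by rewrite mulNr oppr_le0 divr_ge0 // ltW.
  by move=> k; rewrite hue ler_pM2r ?invr_gt0 // lerBrDr addrC subrr yge.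
have hSs : Ssum (Fm x) = e^-1.
  rewrite /Ssum (eq_bigr (fun k => ysum x k / e)); last first.
    by move=> k _; rewrite hue hmn; field; rewrite gt_eqF.
  case: hx => _ [hs _].
  by rewrite -mulr_suml sum_ysum hs mul1r.
apply/rowP => i; rewrite !mxE hue hSs hmn.
by field; rewrite dR gt_eqF.
Qed.
Lemma Ssum_ge0 (R : realType) r (u : 'rV[R]_r) : 0 <= Ssum u.
Proof. by apply: sumr_ge0 => k _; rewrite subr_ge0 mn_le. Qed.

Lemma Ssum_gt0 (R : realType) r (u : 'rV[R]_r) : sphere u -> 0 < Ssum u.
Proof.
move=> hu; rewrite lt0r Ssum_ge0 andbT; apply/eqP => h0.
have hge : forall k : 'I_r.+1, true -> 0 <= ue u k - mn u.
  by move=> k _; rewrite subr_ge0 mn_le.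
have H := psumr_eq0P hge h0.
have hm : mn u = 0 by have := H ord_max isT; rewrite ue_max sub0r => /eqP; rewrite oppr_eq0 => /eqP.
have hj : forall j, u ord0 j = 0.
  by move=> j; have := H (lift ord_max j) isT; rewrite ue_lift hm subr0.
move: hu; rewrite /sphere /= (eq_bigr (fun=> 0)); last by move=> j _; rewrite hj expr0n.
by rewrite big1 // => /esym/eqP; rewrite oner_eq0.
Qed.

Lemma ysum_Gm (R : realType) r d (u : 'rV[R]_r) k : (0 < d)%N -> sphere u ->
  ysum (Gm d u) k = (ue u k - mn u) / Ssum u.
Proof.
move=> d0 hu.
have dR : (d%:R : R) != 0 by rewrite pnatr_eq0 -lt0n.
have S0 := Ssum_gt0 hu.
have h := ysum_const d (fun k => (ue u k - mn u) / (Ssum u * d%:R)) k.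
rewrite /= in h; rewrite /Gm h.
by field; rewrite dR gt_eqF.
Qed.

Lemma Gm_inA (R : realType) r d (u : 'rV[R]_r) : (0 < d)%N -> sphere u -> inA (Gm d u).
Proof.
move=> d0 hu.
have S0 := Ssum_gt0 hu.
split; [|split].
- move=> i; rewrite mxE; apply: divr_ge0; first by rewrite subr_ge0 mn_le.
  by apply: mulr_ge0; [exact: ltW | exact: ler0n].
- rewrite -sum_ysum (eq_bigr (fun k => (ue u k - mn u) / Ssum u)); last first.
    by move=> k _; exact: ysum_Gm.
  by rewrite -mulr_suml -/(Ssum u) mulfV // gt_eqF.
- have [k0 hk0] := mn_attained u.
  apply: (face_of_miss (k := k0)) => i hi.
  by rewrite inE negbK mxE hi -hk0 subrr mul0r.
Qed.

Lemma FmGm (R : realType) r d (u : 'rV[R]_r) : (0 < d)%N -> sphere u -> Fm (Gm d u) = u.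
Proof.
move=> d0 hu.
have S0 := Ssum_gt0 hu.
have hz : zF (Gm d u) = (Ssum u)^-1 *: u.
  apply/rowP => j; rewrite !mxE !ysum_Gm // ue_lift ue_max.
  by field; rewrite gt_eqF.
have he : enorm (zF (Gm d u)) = (Ssum u)^-1.
  rewrite /enorm hz.
  under eq_bigr do rewrite mxE exprMn.
  rewrite -mulr_sumr.
  move: hu; rewrite /sphere /= => ->; rewrite mulr1 sqrtr_sqr ger0_norm //.
  by rewrite invr_ge0 ltW.
apply/rowP => j; rewrite /Fm he hz !mxE invrK mulrA mulfV ?mul1r //.
by rewrite gt_eqF.
Qed.
Lemma cont_cst (R : realType) (T : topologicalType) (c : R) (x : T) :
  {for x, continuous (fun=> c)}.
Proof. have -> : (fun=> c) = (cst c : T -> R) by []. exact: cst_continuous. Qed.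

Lemma cont_ysum (R : realType) r d (k : 'I_r.+1) (x : 'rV[R]_(r.+1 * d)) :
  {for x, continuous (fun y : 'rV[R]_(r.+1 * d) => ysum y k)}.
Proof. by apply: cont_sum => i _; exact: cont_coord. Qed.

Lemma cont_zF (R : realType) r d (x : 'rV[R]_(r.+1 * d)) :
  {for x, continuous (@zF R r d)}.
Proof.
apply: cont_row => j.
have -> : (fun y => zF y ord0 j) =
   ((fun y : 'rV[R]_(r.+1 * d) => ysum y (lift ord_max j)) - (fun y => ysum y ord_max)).
  by apply: boolp.funext => y; rewrite mxE.
by apply: continuousB; exact: cont_ysum.
Qed.

Lemma cont_enorm_zF (R : realType) r d (x : 'rV[R]_(r.+1 * d)) :
  {for x, continuous (fun y => enorm (@zF R r d y))}.
Proof.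
apply: (continuous_comp (f := fun y => \sum_j zF y ord0 j ^+ 2) (g := Num.sqrt)).
  apply: cont_sum => j _.
  apply: (continuousM (s := fun y => zF y ord0 j) (t := fun y => zF y ord0 j));
  apply: (continuous_comp (f := @zF R r d) (g := fun z : 'rV[R]_r => z ord0 j));
  by [exact: cont_zF | exact: cont_coord].
exact: sqrt_continuous.
Qed.

Lemma cont_Fm (R : realType) r d (x : 'rV[R]_(r.+1 * d)) :
  0 < \sum_j zF x ord0 j ^+ 2 -> {for x, continuous (@Fm R r d)}.
Proof.
move=> hS.
apply: (continuousZ (s := fun y => (enorm (zF y))^-1) (f := @zF R r d)); last exact: cont_zF.
apply: continuousV; last exact: cont_enorm_zF.
by rewrite /enorm gt_eqF // sqrtr_gt0.
Qed.

Lemma cont_ue (R : realType) r (k : 'I_r.+1) (u : 'rV[R]_r) :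
  {for u, continuous (fun v : 'rV[R]_r => ue v k)}.
Proof.
rewrite /ue; case: (unlift ord_max k) => [j|]; first exact: cont_coord.
have -> : (fun=> 0) = (cst 0 : 'rV[R]_r -> R) by [].
exact: cst_continuous.
Qed.

Lemma cont_mn (R : realType) r (u : 'rV[R]_r) :
  {for u, continuous (fun v : 'rV[R]_r => mn v)}.
Proof. by apply: cont_min => k; exact: cont_ue. Qed.

Lemma cont_Ssum (R : realType) r (u : 'rV[R]_r) :
  {for u, continuous (fun v : 'rV[R]_r => Ssum v)}.
Proof.
apply: cont_sum => k _.
apply: (continuousB (f := fun v => ue v k) (g := fun v => mn v)).
  exact: cont_ue.
exact: cont_mn.
Qed.

Lemma cont_Gm (R : realType) r d (u : 'rV[R]_r) : (0 < d)%N -> 0 < Ssum u ->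
  {for u, continuous (@Gm R r d)}.
Proof.
move=> d0 S0; apply: cont_row => i.
have -> : (fun v : 'rV[R]_r => Gm d v ord0 i) =
   (fun v : 'rV[R]_r => (ue v (clo i) - mn v) * (Ssum v * d%:R)^-1).
  by apply: boolp.funext => v; rewrite mxE.
apply: (continuousM (s := fun v => ue v (clo i) - mn v)).
  apply: (continuousB (f := fun v => ue v (clo i)) (g := fun v => mn v)).
    exact: cont_ue.
  exact: cont_mn.
apply: continuousV.
  by rewrite mulf_neq0 ?gt_eqF // ltr0n.
apply: (continuousM (s := fun v => Ssum v) (t := fun=> d%:R)).
  exact: cont_Ssum.
exact: cont_cst.
Qed.

Lemma cont_Pm (R : realType) r d (x : 'rV[R]_(r.+1 * d)) :
  {for x, continuous (@Pm R r d)}.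
Proof.
apply: cont_row => i.
have -> : (fun y : 'rV[R]_(r.+1 * d) => Pm y ord0 i) =
  (fun y : 'rV[R]_(r.+1 * d) => ysum y (clo i) * (d%:R)^-1).
  by apply: boolp.funext => y; rewrite mxE.
apply: (continuousM (s := fun y => ysum y (clo i)) (t := fun=> (d%:R)^-1)).
  exact: cont_ysum.
exact: cont_cst.
Qed.
Lemma H_inA (R : realType) r d (x : 'rV[R]_(r.+1 * d)) (t : R) : (0 < d)%N -> inA x ->
  0 <= t <= 1 -> inA ((1 - t) *: Pm x + t *: x).
Proof.
move=> d0 hx /andP[t0 t1].
have [k0 [hx0 hk0]] := inA_k0 d0 hx.
case: (hx) => xge [xs _].
have dR : (d%:R : R) != 0 by rewrite pnatr_eq0 -lt0n.
have sP : \sum_i Pm x ord0 i = 1.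
  rewrite -sum_ysum (eq_bigr (fun k => ysum x k)); first by rewrite sum_ysum.
  move=> k _; have h := ysum_const d (fun k => ysum x k / d%:R) k.
  by rewrite /= in h; rewrite /Pm h; field.
split; [|split].
- move=> i; rewrite !mxE; apply: addr_ge0; apply: mulr_ge0.
  + by rewrite subr_ge0.
  + by apply: divr_ge0; [exact: ysum_ge0 | exact: ler0n].
  + done.
  + exact: xge.
- rewrite (eq_bigr (fun i => (1 - t) * Pm x ord0 i + t * x ord0 i)); last first.
    by move=> i _; rewrite !mxE.
  by rewrite big_split /= -!mulr_sumr sP xs; ring.
- apply: (face_of_miss (k := k0)) => i hi.
  by rewrite inE negbK !mxE hi hk0 hx0 // mul0r !mulr0 addr0.
Qed.

Close Scope ring_scope.

Theorem mainTheorem11 (R : realType) (r d : nat) :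
  0 < r -> 0 < d -> 3 <= (r.+1 * d)%N ->
  homotopy_equiv R
    (@geom_real R _ (Delta_t (@cyc_pow_adj (r.+1 * d) r) d))
    (@sphere R r).
Proof.
move=> r0 d0 _.
exists (@Fm R r d), (@Gm R r d).
split; [|split; [|split; [|split; [|split]]]].
- apply: continuous_in_subspaceT => x; rewrite inE => hx.
  exact: cont_Fm (zF_neq0 d0 hx).
- apply: continuous_in_subspaceT => u; rewrite inE => hu.
  exact: cont_Gm d0 (Ssum_gt0 hu).
- by move=> _ [x hx <-]; exact: Fm_sphere.
- by move=> _ [u hu <-]; exact: Gm_inA.
- exists (fun p : R * 'rV[R]_(r.+1 * d) => ((1 - p.1) *: Pm p.2 + p.1 *: p.2)%R).
  split; [|split; [|split]].
  + apply: continuous_subspaceT => p.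
    apply: (continuousD (f := fun p : R * 'rV[R]_(r.+1 * d) => ((1 - p.1) *: Pm p.2)%R)
                        (g := fun p : R * 'rV[R]_(r.+1 * d) => (p.1 *: p.2)%R)).
    * apply: (continuousZ (s := fun p : R * 'rV[R]_(r.+1 * d) => (1 - p.1)%R)
                          (f := fun p : R * 'rV[R]_(r.+1 * d) => Pm p.2)).
      - apply: (continuousB (f := fun _ : R * 'rV[R]_(r.+1 * d) => (1%R : R)) (g := fun p : R * 'rV[R]_(r.+1 * d) => p.1)).
          exact: cont_cst.
        exact: cont_fst.
      - apply: (continuous_comp (f := @snd R 'rV[R]_(r.+1 * d)) (g := @Pm R r d)).
          exact: cont_snd.
        exact: cont_Pm.
    * apply: (continuousZ (s := fun p : R * 'rV[R]_(r.+1 * d) => p.1)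
                          (f := fun p : R * 'rV[R]_(r.+1 * d) => p.2)).
        exact: cont_fst.
      exact: cont_snd.
  + by move=> t x ht hx; exact: H_inA.
  + by move=> x hx /=; rewrite subr0 scale1r scale0r addr0 GmFm.
  + by move=> x hx /=; rewrite subrr scale0r add0r scale1r.
- exists (fun p : R * 'rV[R]_r => p.2).
  split; [|split; [|split]].
  + by apply: continuous_subspaceT => p; exact: cont_snd.
  + by move=> t u _ hu.
  + by move=> u hu /=; rewrite FmGm.
  + by [].
Qed.
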